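(* Let $n\geq 1$ be an integer and let $U$ be any $2^n\times 2^n$ unitary matrix, acting on $n$ qubits. Let $\rho$ be the $(n+1)$-qubit density matrix $$\rho=\frac{1}{2^{n+1}}\begin{pmatrix}\mathbb{1} & U^\dagger\\ U & \mathbb{1}\end{pmatrix},$$ written in block form with respect to the computational basis of the first (''clean'') qubit. For every $y\in\{0,1\}^n$, the multiplicative negativity $M_y$ of $\rho$ with respect to the bipartition $y$ satisfies $$M_y\leq \frac{5}{4}.$$
   Context: The state $\rho$ lives on one clean qubit tensored with $n$ further qubits, and $\mathbb{1}$ denotes the $2^n\times 2^n$ identity. For $y\in\{0,1\}^n$, let $\rho_y$ denote the partial transpose of $\rho$ taken over those non-clean qubits $i$ with $y_i=1$ (the clean qubit is never transposed); equivalently, if $U_y$ denotes the partial transpose of $U$ over the qubits $i$ with $y_i=1$, then $\rho_y=\frac{1}{2^{n+1}}\begin{pmatrix}\mathbb{1} & U_y^\dagger\\ U_y & \mathbb{1}\end{pmatrix}$. The multiplicative negativity for bipartition $y$ is $M_y=\sum_{\lambda\in\mathrm{spec}(\rho_y)}|\lambda|$, the sum of the absolute values of the eigenvalues of $\rho_y$ (counted with multiplicity). *)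

(* Defs.v *)
From HB Require Import structures.
From mathcomp Require Import all_boot all_order all_algebra.
From mathcomp Require Import sesquilinear spectral.
Set Implicit Arguments. Unset Strict Implicit. Unset Printing Implicit Defensive.
Import Order.TTheory GRing.Theory Num.Theory.
Local Open Scope ring_scope.
Local Open Scope sesquilinear_scope.

Definition bitn (a k : nat) : bool := odd (a %/ 2 ^ k).

Definition mixbits (n : nat) (y : 'I_n -> bool) (a b : nat) : nat :=
  (\sum_(k < n) (if y k then bitn b k else bitn a k) * 2 ^ k)%N.

Lemma sum_pow2_lt (n : nat) : (\sum_(k < n) 2 ^ k < 2 ^ n)%N.
Proof.
elim: n => [|n IH]; first by rewrite big_ord0.
rewrite big_ord_recr /= expnS mul2n -addnn ltn_add2r; exact: IH.
Qed.

Lemma mixbits_lt (n : nat) (y : 'I_n -> bool) (a b : nat) :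
  (mixbits y a b < 2 ^ n)%N.
Proof.
apply: leq_ltn_trans (sum_pow2_lt n); apply: leq_sum => k _.
by case: (y k); [case: (bitn b k)|case: (bitn a k)]; rewrite ?mul1n ?mul0n.
Qed.

Definition mixo (n : nat) (y : 'I_n -> bool) (a b : 'I_(2 ^ n)) : 'I_(2 ^ n) :=
  Ordinal (mixbits_lt y a b).

(* partial transpose of U over the qubits k with y k = true:
   <i| U_y |j> = <i'| U |j'>, where i' (resp. j') is i (resp. j)
   with the bits at the transposed positions taken from j (resp. i). *)
Definition ptrans (C : numClosedFieldType) (n : nat) (y : 'I_n -> bool)
  (U : 'M[C]_(2 ^ n)) : 'M[C]_(2 ^ n) :=
  \matrix_(i, j) U (mixo y i j) (mixo y j i).

Definition rho_y (C : numClosedFieldType) (n : nat) (y : 'I_n -> bool)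
  (U : 'M[C]_(2 ^ n)) : 'M[C]_(2 ^ n + 2 ^ n) :=
  (2 ^+ n.+1)^-1 *:
    block_mx 1%:M ((ptrans y U) ^t*) (ptrans y U) 1%:M.

Definition is_spectrum (C : numClosedFieldType) (m : nat) (A : 'M[C]_m)
  (s : seq C) : Prop :=
  char_poly A = \prod_(l <- s) ('X - l%:P).

(* multiplicative negativity: sum of |eigenvalues| (with multiplicity);
   well-defined since the root multiset of char_poly is unique *)
Definition mult_negativity (C : numClosedFieldType) (s : seq C) : C := \sum_(l <- s) `|l|.

(* Main.v *)
Require Import Defs.
From HB Require Import structures.
From mathcomp Require Import all_boot all_order all_algebra.
From mathcomp Require Import sesquilinear spectral.
From mathcomp Require Import ring.
Set Implicit Arguments. Unset Strict Implicit. Unset Printing Implicit Defensive.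
Import Order.TTheory GRing.Theory Num.Theory.
Local Open Scope ring_scope.
Local Open Scope sesquilinear_scope.

Lemma char_poly_similar (F : fieldType) n (P A : 'M[F]_n) : P \in unitmx ->
  char_poly (invmx P *m A *m P) = char_poly A.
Proof.
move=> Pu; rewrite /char_poly.
have -> : char_poly_mx (invmx P *m A *m P) =
   map_mx polyC (invmx P) *m char_poly_mx A *m map_mx polyC P.
  rewrite /char_poly_mx mulmxBr mulmxBl -!map_mxM mul_mx_scalar -scalemxAl.
  by rewrite -map_mxM mulVmx // map_mx1 scalemx1.
rewrite !det_mulmx mulrC mulrA -det_mulmx -map_mxM mulmxV //.
by rewrite map_mx1 det1 mul1r.
Qed.

Lemma bitn_sum n (c : nat -> bool) j : (j < n)%N ->
  bitn (\sum_(k < n) c k * 2 ^ k) j = c j.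
Proof.
elim: n c j => [|n IH] c j //; rewrite big_ord_recl /= expn0 muln1.
have -> : (\sum_(i < n) c (bump 0 i) * 2 ^ bump 0 i = 2 * \sum_(i < n) c i.+1 * 2 ^ i)%N.
  rewrite big_distrr /=; apply: eq_bigr => i _.
  by rewrite /bump /= add1n expnS mulnCA.
case: j => [|j] Hj.
  rewrite /bitn expn0 divn1 oddD oddM /=. by case: (c 0%N).
rewrite /bitn expnS divnMA.
have -> : ((c 0%N + 2 * \sum_(i < n) c i.+1 * 2 ^ i) %/ 2 = \sum_(i < n) c i.+1 * 2 ^ i)%N.
  by rewrite addnC mulnC divnMDl // divn_small ?addn0 //; case: (c 0%N).
exact: (IH (fun i => c i.+1)).
Qed.

Lemma sum_bitn n a : (a < 2 ^ n)%N -> a = (\sum_(k < n) bitn a k * 2 ^ k)%N.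
Proof.
elim: n a => [|n IH] a Ha.
  by rewrite big_ord0; move: Ha; rewrite expn0 ltnS leqn0 => /eqP.
rewrite big_ord_recl /= expn0 muln1.
have Ha2 : (a %/ 2 < 2 ^ n)%N by rewrite ltn_divLR // -expnSr.
rewrite {1}(divn_eq a 2) {1}(IH _ Ha2) modn2.
rewrite /bitn expn0 divn1 addnC; congr (_ + _)%N.
rewrite big_distrl /=; apply: eq_bigr => i _.
by rewrite /bump /= add1n expnS divnMA -mulnA (mulnC 2).
Qed.

Definition liftb n (f : 'I_n -> bool) (j : nat) : bool :=
  if @insub _ (fun j => j < n)%N _ j is Some k then f k else false.

Lemma liftbE n (f : 'I_n -> bool) (k : 'I_n) : liftb f k = f k.
Proof. by rewrite /liftb valK. Qed.

Lemma bitn_mix n (y : 'I_n -> bool) a b (k : 'I_n) :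
  bitn (mixbits y a b) k = if y k then bitn b k else bitn a k.
Proof.
rewrite /mixbits.
have -> : (\sum_(k < n) (if y k then bitn b k else bitn a k) * 2 ^ k =
   \sum_(k < n) liftb (fun k => if y k then bitn b k else bitn a k) k * 2 ^ k)%N.
  by apply: eq_bigr => i _; rewrite liftbE.
by rewrite bitn_sum // liftbE.
Qed.

Lemma mixo_inv n (y : 'I_n -> bool) (i j : 'I_(2 ^ n)) :
  mixo y (mixo y i j) (mixo y j i) = i.
Proof.
apply: val_inj => /=; rewrite /mixbits [RHS](sum_bitn (ltn_ord i)).
apply: eq_bigr => k _; rewrite !bitn_mix.
by case: (y k).
Qed.

Lemma tr_frob (C : numClosedFieldType) m (V : 'M[C]_m) :
  \tr (V *m V ^t*) = \sum_i \sum_j V i j * (V i j)^*.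
Proof.
rewrite /mxtrace; apply: eq_bigr => i _; rewrite mxE.
by apply: eq_bigr => j _; rewrite !mxE.
Qed.

Lemma ptrans_frob (C : numClosedFieldType) n (y : 'I_n -> bool) (U : 'M[C]_(2 ^ n)) :
  \tr (ptrans y U *m (ptrans y U) ^t*) = \tr (U *m U ^t*).
Proof.
rewrite !tr_frob !pair_big /=.
pose f (p : 'I_(2 ^ n) * 'I_(2 ^ n)) := (mixo y p.1 p.2, mixo y p.2 p.1).
have finv : involutive f by case=> i j; rewrite /f /= !mixo_inv.
rewrite [RHS](reindex_inj (inv_inj finv)) /=.
by apply: eq_bigr => p _; rewrite !mxE.
Qed.

Lemma prod_diag (C : numClosedFieldType) m (f : 'I_m -> C) :
  \prod_i ('X - (f i)%:P) = \prod_(x <- [seq f i | i : 'I_m]) ('X - x%:P).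
Proof. by rewrite big_map big_enum. Qed.

Lemma sum_diag (C : numClosedFieldType) m (f : 'I_m -> C) (g : C -> C) :
  \sum_i g (f i) = \sum_(x <- [seq f i | i : 'I_m]) g x.
Proof. by rewrite big_map big_enum. Qed.

Section Spec.
Variables (C : numClosedFieldType) (m : nat) (A : 'M[C]_m).
Hypothesis hA : A \is hermsymmx.
Let d := spectral_diag A.
Let P := spectralmx A.
Let Pu : P \in unitmx := spectral_unit A.
Let AE : A = invmx P *m diag_mx d *m P.
Proof. exact/orthomx_spectralP/hermitian_normalmx. Qed.

Lemma spec_char : char_poly A = \prod_(x <- [seq d 0 i | i : 'I_m]) ('X - x%:P).
Proof.
rewrite AE char_poly_similar // char_poly_trig // -prod_diag.
by apply: eq_bigr => i _; rewrite mxE eqxx mulr1n.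
Qed.

Lemma spec_char_refl c :
  char_poly (c%:M - A) = \prod_(x <- [seq c - d 0 i | i : 'I_m]) ('X - x%:P).
Proof.
have -> : c%:M - A = invmx P *m diag_mx (\row_i (c - d 0 i)) *m P.
  have cE : c%:M = invmx P *m c%:M *m P :> 'M[C]_m.
    by rewrite mul_mx_scalar -scalemxAl mulVmx // scalemx1.
  rewrite cE {1}AE -mulmxBl -mulmxBr; congr (_ *m _ *m _).
  apply/matrixP => i j; rewrite !mxE; case: (i == j) => /=.
    by rewrite !mulr1n.
  by rewrite !mulr0n subrr.
rewrite char_poly_similar // char_poly_trig // -prod_diag.
by apply: eq_bigr => i _; rewrite !mxE eqxx mulr1n.
Qed.

Lemma spec_tr : \tr A = \sum_i d 0 i.
Proof.
by rewrite AE mxtrace_mulC mulmxA mulmxV // mul1mx mxtrace_diag.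
Qed.

Lemma spec_tr2 : \tr (A *m A) = \sum_i d 0 i ^+ 2.
Proof.
have -> : A *m A = invmx P *m (diag_mx d *m diag_mx d) *m P.
  by rewrite AE !mulmxA -[_ *m P *m invmx P]mulmxA mulmxV // mulmx1.
rewrite mxtrace_mulC !mulmxA mulmxV // mul1mx mulmx_diag mxtrace_diag.
by apply: eq_bigr => i _; rewrite mxE expr2.
Qed.

Lemma spec_real i : d 0 i \is Num.real.
Proof. exact: (mxOverP (hermitian_spectral_diag_real hA)). Qed.

End Spec.

Section Rho.
Variables (C : numClosedFieldType) (n : nat) (y : 'I_n -> bool) (U : 'M[C]_(2 ^ n)).
Hypothesis hU : U \is unitarymx.
Let V := ptrans y U.
Let a : C := (2 ^+ n.+1)^-1.

Lemma rho_herm : rho_y y U \is hermsymmx.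
Proof.
rewrite qualifE /= expr0 scale1r; apply/eqP.
rewrite /rho_y linearZ /= map_mxZ tr_block_mx map_block_mx /=.
rewrite !trmx1 !map_mx1 trmxCK.
by rewrite fmorphV rmorphXn /= (conjC_nat _ 2%N).
Qed.

Lemma two_neq0 k : (2 ^+ k : C) != 0.
Proof. by rewrite expf_neq0 // pnatr_eq0. Qed.

Lemma rho_tr : \tr (rho_y y U) = 1.
Proof.
rewrite /rho_y mxtraceZ mxtrace_block !mxtrace1 natrX.
have := two_neq0 n; rewrite exprS => h2.
field; exact: h2.
Qed.

Lemma V_frob : \tr (V *m V ^t*) = (2 ^+ n : C).
Proof.
by rewrite /V ptrans_frob (unitarymxP hU) mxtrace1 natrX.
Qed.

Lemma rho_tr2 : \tr (rho_y y U *m rho_y y U) = (2 ^+ n)^-1.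
Proof.
rewrite /rho_y -scalemxAl -scalemxAr scalerA mxtraceZ mulmx_block.
rewrite mxtrace_block !mul1mx !mxtraceD mxtrace_mulC -/V V_frob mxtrace1 natrX.
have := two_neq0 n; rewrite exprS => h2.
field; exact: h2.
Qed.

Lemma rho_refl :
  char_poly ((2 ^+ n)^-1%:M - rho_y y U) = char_poly (rho_y y U).
Proof.
pose J : 'M[C]_(2 ^ n + 2 ^ n) := block_mx 1%:M 0 0 (- 1%:M).
have JJ : J *m J = 1%:M.
  rewrite mulmx_block !mul1mx !mul0mx !mulmx0 !addr0 !add0r mulNmx mulmxN mul1mx opprK.
  by rewrite -scalar_mx_block.
have [Ju _] := mulmx1_unit JJ.
have iJ : invmx J = J by rewrite -[invmx J]mulmx1 -JJ mulmxA mulVmx // mul1mx.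
rewrite -(char_poly_similar (rho_y y U) Ju) iJ; congr char_poly.
rewrite /rho_y -scalemxAr -scalemxAl !mulmx_block.
rewrite !mul1mx !mul0mx !mulmx0 !addr0 !add0r !mulNmx !mulmxN !mul1mx !mulmx1 opprK.
rewrite scalar_mx_block scale_block_mx opp_block_mx add_block_mx scale_block_mx.
rewrite !add0r !scalerN !scalemx1.
have -> : (2 ^- n)%:M - (2 ^- n.+1)%:M = (2 ^- n.+1)%:M :> 'M[C]_(2 ^ n).
  rewrite -raddfB /=; congr (_%:M).
  have := two_neq0 n; rewrite exprS => h2.
  field; exact: h2.
by [].
Qed.
End Rho.

Lemma ptineq (C : numClosedFieldType) (c x : C) : 0 < c -> x \is Num.real ->
  `|x| + `|c - x| <= c + (2 * x - c) ^+ 2 / (4 * c).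
Proof.
move=> c0 xr.
have cr : c \is Num.real by rewrite gtr0_real.
have c4 : 4 * c != 0 by rewrite mulf_neq0 ?pnatr_eq0 // gt_eqF.
have key : forall L r : C, r \is Num.real ->
   c + (2 * x - c) ^+ 2 / (4 * c) - L = r ^+ 2 / (4 * c) ->
   L <= c + (2 * x - c) ^+ 2 / (4 * c).
  move=> L r rr h; rewrite -subr_ge0 h divr_ge0 -?realEsqr //.
  by apply: mulr_ge0; [exact: ler0n | exact: ltW].
have cxr : c - x \is Num.real by rewrite rpredB.
have c0' : c != 0 by rewrite gt_eqF.
case: (real_ge0P xr) => hx; case: (real_ge0P cxr) => hcx.
- apply: (key _ (2 * x - c)); first by rewrite rpredB ?rpredM ?rpred_nat.
  by field.
- apply: (key _ (2 * x - 3 * c)); first by rewrite rpredB ?rpredM ?rpred_nat.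
  by field.
- apply: (key _ (2 * x + c)); first by rewrite rpredD ?rpredM ?rpred_nat.
  by field.
- exfalso; move: (ltrD hx hcx); rewrite addr0 addrC subrK => h.
  by move: (lt_trans c0 h); rewrite ltxx.
Qed.

Theorem theorem1 (C : numClosedFieldType) (n : nat) (hn : (0 < n)%N)
  (U : 'M[C]_(2 ^ n)) (hU : U \is unitarymx) (y : 'I_n -> bool)
  (s : seq C) (hs : is_spectrum (rho_y y U) s) :
  mult_negativity s <= 5%:R / 4%:R.
Proof.
have hA := rho_herm y U.
set A := rho_y y U in hA hs *.
set d := spectral_diag A.
set c : C := (2 ^+ n)^-1.
have Hs : perm_eq s [seq d 0 i | i : 'I_(2 ^ n + 2 ^ n)].
  by apply: prod_XsubC_eq; rewrite -hs spec_char.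
have Hr : perm_eq [seq d 0 i | i : 'I_(2 ^ n + 2 ^ n)]
                  [seq c - d 0 i | i : 'I_(2 ^ n + 2 ^ n)].
  by apply: prod_XsubC_eq; rewrite -spec_char // -spec_char_refl // rho_refl.
have M1 : mult_negativity s = \sum_i `|d 0 i|.
  by rewrite /mult_negativity (perm_big _ Hs) /= -sum_diag.
have M2 : mult_negativity s = \sum_i `|c - d 0 i|.
  by rewrite M1 (sum_diag _ (fun x => `|x|)) (perm_big _ Hr) /= -sum_diag.
have h2 := two_neq0 C n.
have c0 : 0 < c by rewrite invr_gt0 exprn_gt0.
have S1 : \sum_i d 0 i = 1 by rewrite -spec_tr // rho_tr.
have S2 : \sum_i d 0 i ^+ 2 = c by rewrite -spec_tr2 // rho_tr2.
have Hle : mult_negativity s + mult_negativity s <=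
    \sum_(i < 2 ^ n + 2 ^ n) (c + (2 * d 0 i - c) ^+ 2 / (4 * c)).
  rewrite {1}M1 M2 -big_split /=; apply: ler_sum => i _.
  exact: ptineq c0 (spec_real hA i).
have E : \sum_(i < 2 ^ n + 2 ^ n) (c + (2 * d 0 i - c) ^+ 2 / (4 * c)) = 5%:R / 2%:R.
  have -> : \sum_(i < 2 ^ n + 2 ^ n) (c + (2 * d 0 i - c) ^+ 2 / (4 * c)) =
     \sum_(i < 2 ^ n + 2 ^ n) (5%:R / 4%:R * c + c^-1 * d 0 i ^+ 2 - d 0 i).
    apply: eq_bigr => i _; rewrite /c; field.
    exact: h2.
  rewrite sumrB big_split /= -!mulr_sumr S1 S2 sumr_const card_ord -[c *+ _]mulr_natr natrD natrX.
  rewrite /c; field; exact: h2.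
rewrite E in Hle.
rewrite -subr_ge0.
have -> : 5%:R / 4%:R - mult_negativity s =
   (5%:R / 2%:R - (mult_negativity s + mult_negativity s)) / 2%:R.
  by field.
by rewrite divr_ge0 // subr_ge0.
Qed.
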